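(* Under the assumptions of the multinomial lattice ($u>d>0$, $a_l=u^{L-l}d^{l-1}$, $a_L<1+R<a_1$, $a_l\neq 1+R$ for all $l$), let $X=(K-S_N)^+$ (European put) or $X=(S_N-K)^+$ (European call) with strike $K\ge0$ and maturity $N$, priced by $\pi_Q(0,X)=(1+R)^{-N}E^{Q^N}[X]$. Then for every strike $K$ and every risk-neutral $Q\in\mathcal{D}(\{a_1,\ldots,a_L\},1+R)$, $\pi_{Q_L}(0,X)\le\pi_Q(0,X)\le\pi_{Q_U}(0,X)$, where $Q_L=Q_{l^*,l^*+1}$ with $l^*$ the largest index such that $a_{l^*}>1+R$, and $Q_U=Q_{1,L}$.
   Context: Under $Q^N$, $S_N=S_0\prod_{i=1}^NZ_i$ with $Z_i$ i.i.d. with law $Q=(q_1,\ldots,q_L)$ on $\{a_1,\ldots,a_L\}$. $\mathcal{D}(\mathcal{A},m)$ is the set of probability mass functions on the finite set $\mathcal{A}$ with mean $m$. For $l_1<l_2$ with $a_{l_2}<1+R<a_{l_1}$, $Q_{l_1,l_2}$ is the probability vector with $q_{l_1}=\frac{(1+R)-a_{l_2}}{a_{l_1}-a_{l_2}}$, $q_{l_2}=1-q_{l_1}$, $q_l=0$ otherwise. *)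

(* Defs.v *)
From HB Require Import structures.
From mathcomp Require Import all_boot all_order all_algebra.
Set Implicit Arguments. Unset Strict Implicit. Unset Printing Implicit Defensive.
Import Order.TTheory GRing.Theory Num.Theory.
Local Open Scope ring_scope.

Definition lat_a {R : realFieldType} (u d : R) (L l : nat) : R :=
  u ^+ (L - l) * d ^+ (l - 1).

(* Q in D({a_1,...,a_L}, 1+r): a pmf q_1..q_L on the (distinct) values a_l with mean 1+r *)
Definition risk_neutral {R : realFieldType} (u d r : R) (L : nat) (q : nat -> R) : Prop :=
  (forall l, (1 <= l <= L)%N -> 0 <= q l) /\
  \sum_(1 <= l < L.+1) q l = 1 /\
  \sum_(1 <= l < L.+1) q l * lat_a u d L l = 1 + r.

Definition Qpair {R : realFieldType} (u d r : R) (L l1 l2 : nat) (l : nat) : R :=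
  let p := ((1 + r) - lat_a u d L l2) / (lat_a u d L l1 - lat_a u d L l2) in
  if l == l1 then p else if l == l2 then 1 - p else 0.

Definition lstar {R : realFieldType} (u d r : R) (L : nat) : nat :=
  \max_(l < L.+1 | (1 <= l)%N && (1 + r < lat_a u d L l)) l.

(* E^{Q^N}[f(S_N)], S_N = S0 * prod_{i=1}^N Z_i, Z_i iid with P(Z_i = a_l) = q_l.
   A path is w : 'I_N -> 'I_L, step k takes value a_{w k + 1}. *)
Definition expect_QN {R : realFieldType} (u d : R) (L N : nat) (q : nat -> R)
  (S0 : R) (f : R -> R) : R :=
  \sum_(w : {ffun 'I_N -> 'I_L})
     (\prod_(k < N) q (w k).+1) *
     f (S0 * \prod_(k < N) lat_a u d L (w k).+1).

Definition price {R : realFieldType} (u d r : R) (L N : nat) (q : nat -> R)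
  (S0 : R) (f : R -> R) : R :=
  ((1 + r) ^+ N)^-1 * expect_QN u d L N q S0 f.

Definition put_payoff {R : realFieldType} (K : R) (s : R) : R := Num.max (K - s) 0.
Definition call_payoff {R : realFieldType} (K : R) (s : R) : R := Num.max (s - K) 0.

(* Main.v *)
Require Import Defs.
From HB Require Import structures.
From mathcomp Require Import all_boot all_order all_algebra.
From mathcomp Require Import ring lra zify.
Import Order.TTheory GRing.Theory Num.Theory.
Local Open Scope ring_scope.

Definition convex3 {R : realFieldType} (g : R -> R) : Prop :=
  forall x y z, x < y -> y < z -> (z - x) * g y <= (z - y) * g x + (y - x) * g z.

Lemma convex3_scale_r {R : realFieldType} {g : R -> R} {c : R} :
  convex3 g -> 0 < c -> convex3 (fun x => g (x * c)).
Proof.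
move=> hg hc x y z hxy hyz /=.
have := hg (x * c) (y * c) (z * c).
rewrite !ltr_pM2r // => /(_ hxy hyz) H.
have E1 : (z * c - x * c) = c * (z - x) by ring.
have E2 : (z * c - y * c) = c * (z - y) by ring.
have E3 : (y * c - x * c) = c * (y - x) by ring.
rewrite E1 E2 E3 -!mulrA -mulrDr in H.
by rewrite -(ler_pM2l hc).
Qed.

Lemma convex3_scale_l {R : realFieldType} {g : R -> R} {c : R} :
  convex3 g -> 0 < c -> convex3 (fun x => g (c * x)).
Proof.
move=> hg hc; have := convex3_scale_r hg hc.
by move=> H x y z h1 h2; rewrite ![c * _]mulrC; apply: H.
Qed.

Lemma convex3_maxaff {R : realFieldType} (al be : R) :
  convex3 (fun s => Num.max (al * s + be) 0).
Proof.
move=> x y z hxy hyz /=.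
have H1 : 0 <= z - y by lra.
have H2 : 0 <= y - x by lra.
have H3 : 0 <= z - x by lra.
have E : (z - x) * (al * y + be) = (z - y) * (al * x + be) + (y - x) * (al * z + be) by ring.
case: (leP (al * y + be) 0) => hy.
  rewrite mulr0; apply: addr_ge0; apply: mulr_ge0 => //; by rewrite le_max lexx orbT.
rewrite E; apply: lerD; apply: ler_wpM2l => //; by rewrite le_max lexx.
Qed.

Lemma convex3_inside {R : realFieldType} (h : R -> R) b c x :
  convex3 h -> b < c -> b <= x -> x <= c ->
  (c - b) * h x <= (c - x) * h b + (x - b) * h c.
Proof.
move=> hh hbc hbx hxc.
case: (ltgtP b x) hbx => // [hbx' _|<- _]; last first.
  by rewrite subrr mul0r addr0.
case: (ltgtP x c) hxc => // [hxc' _|-> _]; last first.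
  by rewrite subrr mul0r add0r.
exact: hh.
Qed.

Lemma convex3_outside {R : realFieldType} (h : R -> R) b c x :
  convex3 h -> b < c -> (x <= b \/ c <= x) ->
  (c - x) * h b + (x - b) * h c <= (c - b) * h x.
Proof.
move=> hh hbc [hx|hx].
  case: (ltgtP x b) hx => // [hxb _| -> _]; last by rewrite subrr mul0r addr0.
  have := hh x b c hxb hbc.
  set A := h b; set B := h x; set C := h c => H.
  have E1 : (c - x) * A + (x - b) * C = (c - x) * A - (b - x) * C by ring.
  rewrite E1; lra.
case: (ltgtP c x) hx => // [hcx _| <- _]; last by rewrite subrr mul0r add0r.
have := hh b c x hbc hcx.
set A := h b; set B := h x; set C := h c => H.
have E1 : (c - x) * A + (x - b) * C = (x - b) * C - (x - c) * A by ring.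
rewrite E1; lra.
Qed.


Lemma expect_S {R : realFieldType} (u d : R) (L n : nat) (q : nat -> R) (s : R) (g : R -> R) :
  expect_QN u d L n.+1 q s g =
  \sum_(j < L) q j.+1 * expect_QN u d L n q (s * lat_a u d L j.+1) g.
Proof.
rewrite /expect_QN; symmetry.
under eq_bigr do rewrite mulr_sumr.
rewrite pair_big /=; symmetry.
pose h (p : 'I_L * {ffun 'I_n -> 'I_L}) : {ffun 'I_n.+1 -> 'I_L} :=
  [ffun k => oapp p.2 p.1 (unlift ord0 k)].
pose h' (w : {ffun 'I_n.+1 -> 'I_L}) : 'I_L * {ffun 'I_n -> 'I_L} :=
  (w ord0, [ffun k => w (lift ord0 k)]).
have hK : cancel h h'.
  move=> [j w]; rewrite /h /h' /= ffunE unlift_none /=; congr pair.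
  by apply/ffunP => k; rewrite !ffunE liftK.
have hK' : cancel h' h.
  move=> w; apply/ffunP => k; rewrite /h /h' ffunE.
  by case: unliftP => [k' ->|->] /=; rewrite ?ffunE.
rewrite (reindex h) /=; last by exists h' => x _; [apply: hK | apply: hK'].
apply: eq_bigr => -[j w] _ /=.
rewrite !big_ord_recl /h !ffunE unlift_none /=.
under eq_bigr do rewrite ffunE liftK /=.
under [X in _ * g (_ * (_ * X))]eq_bigr do rewrite ffunE liftK /=.
by rewrite !mulrA.
Qed.

Definition qnonneg {R : realFieldType} (L : nat) (q : nat -> R) :=
  forall l, (1 <= l <= L)%N -> 0 <= q l.

Lemma convex3_sum {R : realFieldType} (I : finType) (c : I -> R) (G : I -> R -> R) :
  (forall i, 0 <= c i) -> (forall i, convex3 (G i)) ->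
  convex3 (fun s => \sum_i c i * G i s).
Proof.
move=> hc hG x y z hxy hyz.
rewrite !mulr_sumr -big_split /=; apply: ler_sum => i _.
rewrite mulrCA (mulrCA (z - y)) (mulrCA (y - x)) -mulrDr.
by apply: ler_wpM2l => //; apply: hG.
Qed.

Lemma lat_a_gt0 {R : realFieldType} (u d : R) L l : 0 < d -> d < u -> 0 < lat_a u d L l.
Proof.
move=> hd hdu; rewrite /lat_a; apply: mulr_gt0; apply: exprn_gt0 => //.
exact: lt_trans hdu.
Qed.

Lemma convex3_expect {R : realFieldType} (u d : R) (L n : nat) (q : nat -> R) (g : R -> R) :
  0 < d -> d < u -> qnonneg L q -> convex3 g ->
  convex3 (fun s => expect_QN u d L n q s g).
Proof.
move=> hd hdu hq hg; rewrite /expect_QN.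
apply: convex3_sum => [w|w].
  apply: prodr_ge0 => k _; apply: hq; by rewrite /= ltn_ord.
apply: convex3_scale_r => //; apply: prodr_gt0 => k _; exact: lat_a_gt0.
Qed.

Lemma cmp_expect {R : realFieldType} (u d : R) (L n : nat) (q q' : nat -> R) (g : R -> R) :
  0 < d -> d < u -> qnonneg L q -> qnonneg L q' -> convex3 g ->
  (forall h, convex3 h -> \sum_(j < L) q j.+1 * h (lat_a u d L j.+1)
                          <= \sum_(j < L) q' j.+1 * h (lat_a u d L j.+1)) ->
  forall s, 0 < s -> expect_QN u d L n q s g <= expect_QN u d L n q' s g.
Proof.
move=> hd hdu hq hq' hg hdom; elim: n => [|n IH] s hs.
  rewrite /expect_QN; rewrite le_eqVlt; apply/orP; left; apply/eqP/eq_bigr => w _; by rewrite !big_ord0.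
rewrite !expect_S.
apply: le_trans (hdom (fun z => expect_QN u d L n q' (s * z) g) _).
  apply: ler_sum => j _; apply: ler_wpM2l; first by apply: hq; rewrite /= ltn_ord.
  apply: IH; apply: mulr_gt0 => //; exact: lat_a_gt0.
by apply: (convex3_scale_l (g := fun t => expect_QN u d L n q' t g)) => //; apply: convex3_expect.
Qed.

Lemma sum_shift {R : realFieldType} (F : nat -> R) L :
  \sum_(1 <= l < L.+1) F l = \sum_(j < L) F j.+1.
Proof. by rewrite big_add1 big_mkord. Qed.

Lemma sum_ind {R : realFieldType} L l (c : R) (F : nat -> R) :
  (1 <= l <= L)%N -> \sum_(j < L) (if j.+1 == l then c else 0) * F j.+1 = c * F l.
Proof.
move=> /andP[h1 h2].
have hl : (l.-1 < L)%N by lia.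
rewrite (bigD1 (Ordinal hl)) //= prednK // eqxx big1 ?addr0 // => j hj.
case: eqP; last by rewrite mul0r.
move=> E; exfalso; move/eqP: hj; apply; apply: val_inj => /=; lia.
Qed.

Lemma qpair_sum {R : realFieldType} (u d r : R) L l1 l2 (F : nat -> R) :
  (1 <= l1 <= L)%N -> (1 <= l2 <= L)%N -> l1 != l2 ->
  \sum_(j < L) Qpair u d r L l1 l2 j.+1 * F j.+1 =
  ((1 + r) - lat_a u d L l2) / (lat_a u d L l1 - lat_a u d L l2) * F l1
  + (1 - ((1 + r) - lat_a u d L l2) / (lat_a u d L l1 - lat_a u d L l2)) * F l2.
Proof.
move=> h1 h2 h12.
set p := ((1 + r) - lat_a u d L l2) / (lat_a u d L l1 - lat_a u d L l2).
rewrite -(sum_ind _ _ p F h1) -(sum_ind _ _ (1 - p) F h2) -big_split /=.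
apply: eq_bigr => j _; rewrite -mulrDl /Qpair -/p.
case: eqP => [E|]; last by rewrite add0r.
by rewrite -E in h12; rewrite (negbTE h12) addr0.
Qed.

Lemma qpair_nonneg {R : realFieldType} (u d r : R) L l1 l2 :
  0 <= ((1 + r) - lat_a u d L l2) / (lat_a u d L l1 - lat_a u d L l2) <= 1 ->
  qnonneg L (Qpair u d r L l1 l2).
Proof.
move=> /andP[h0 h1] l _; rewrite /Qpair.
case: ifP => // _; case: ifP => // _; by rewrite subr_ge0.
Qed.

Lemma sum_lin {R : realFieldType} L (q x : nat -> R) (hb hc b c : R) :
  \sum_(j < L) q j.+1 * ((c - x j.+1) * hb + (x j.+1 - b) * hc) =
  (c * \sum_(j < L) q j.+1 - \sum_(j < L) q j.+1 * x j.+1) * hb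
  + (\sum_(j < L) q j.+1 * x j.+1 - b * \sum_(j < L) q j.+1) * hc.
Proof.
have E : forall j : 'I_L, q j.+1 * ((c - x j.+1) * hb + (x j.+1 - b) * hc) =
   q j.+1 * (c * hb - b * hc) + (q j.+1 * x j.+1) * (hc - hb).
  by move=> j; ring.
rewrite (eq_bigr _ (fun j _ => E j)) big_split /= -!mulr_suml; ring.
Qed.

Lemma lat_a_mono {R : realFieldType} (u d : R) L l l' :
  0 < d -> d < u -> (1 <= l)%N -> (l <= l')%N -> (l' <= L)%N ->
  lat_a u d L l' <= lat_a u d L l.
Proof.
move=> hd hdu h1 h2 h3; rewrite /lat_a.
have E1 : (L - l = (L - l') + (l' - l))%N by lia.
have E2 : (l' - 1 = (l - 1) + (l' - l))%N by lia.
rewrite E1 E2 !exprD.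
have hu : 0 < u by exact: lt_trans hdu.
have Hk : d ^+ (l' - l) <= u ^+ (l' - l).
  by apply: lerXn2r; rewrite ?nnegrE ?ltW.
have HU : 0 < u ^+ (L - l') by exact: exprn_gt0.
have HD : 0 < d ^+ (l - 1) by exact: exprn_gt0.
set U := u ^+ (L - l') in HU *; set D := d ^+ (l - 1) in HD *.
apply: (@le_trans _ _ (U * (D * u ^+ (l' - l)))).
  by apply: ler_wpM2l; [exact: ltW | apply: ler_wpM2l => //; exact: ltW].
by rewrite le_eqVlt; apply/orP; left; apply/eqP; ring.
Qed.

Lemma p01 {R : realFieldType} (b m c : R) : b < m -> m < c -> 0 <= (m - b) / (c - b) <= 1.
Proof.
move=> h1 h2; apply/andP; split.
  apply: divr_ge0; lra.
rewrite ler_pdivrMr; lra.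
Qed.

Lemma dom_low {R : realFieldType} L (q x : nat -> R) (h : R -> R) b c m :
  b < c -> qnonneg L q -> \sum_(j < L) q j.+1 = 1 -> \sum_(j < L) q j.+1 * x j.+1 = m ->
  (forall j : 'I_L, (c - x j.+1) * h b + (x j.+1 - b) * h c <= (c - b) * h (x j.+1)) ->
  (m - b) / (c - b) * h c + (1 - (m - b) / (c - b)) * h b <= \sum_(j < L) q j.+1 * h (x j.+1).
Proof.
move=> hbc hq hs1 hsm hpt.
have hcb : 0 < c - b by lra.
rewrite -(ler_pM2l hcb).
have -> : (c - b) * ((m - b) / (c - b) * h c + (1 - (m - b) / (c - b)) * h b)
   = (c * 1 - m) * h b + (m - b * 1) * h c.
  by field; rewrite gt_eqF.
rewrite -hs1 -hsm -sum_lin mulr_sumr; apply: ler_sum => j _.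
rewrite mulrCA; apply: ler_wpM2l; last exact: hpt.
by apply: hq; rewrite /= ltn_ord.
Qed.

Lemma dom_up {R : realFieldType} L (q x : nat -> R) (h : R -> R) b c m :
  b < c -> qnonneg L q -> \sum_(j < L) q j.+1 = 1 -> \sum_(j < L) q j.+1 * x j.+1 = m ->
  (forall j : 'I_L, (c - b) * h (x j.+1) <= (c - x j.+1) * h b + (x j.+1 - b) * h c) ->
  \sum_(j < L) q j.+1 * h (x j.+1) <= (m - b) / (c - b) * h c + (1 - (m - b) / (c - b)) * h b.
Proof.
move=> hbc hq hs1 hsm hpt.
have hcb : 0 < c - b by lra.
rewrite -(ler_pM2l hcb).
have -> : (c - b) * ((m - b) / (c - b) * h c + (1 - (m - b) / (c - b)) * h b)
   = (c * 1 - m) * h b + (m - b * 1) * h c.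
  by field; rewrite gt_eqF.
rewrite -hs1 -hsm -sum_lin mulr_sumr; apply: ler_sum => j _.
rewrite mulrCA; apply: ler_wpM2l; last exact: hpt.
by apply: hq; rewrite /= ltn_ord.
Qed.

Theorem mainTheorem6 (R : realFieldType) (u d r S0 : R) (L N : nat)
  (hd : 0 < d) (hdu : d < u) (hS0 : 0 < S0)
  (hL : lat_a u d L L < 1 + r) (h1 : 1 + r < lat_a u d L 1)
  (hne : forall l, (1 <= l <= L)%N -> lat_a u d L l != 1 + r) :
  forall (is_call : bool) (K : R), 0 <= K ->
  let f := if is_call then call_payoff K else put_payoff K in
  forall q : nat -> R, risk_neutral u d r L q ->
    price u d r L N (Qpair u d r L (lstar u d r L) (lstar u d r L).+1) S0 f
      <= price u d r L N q S0 f
    /\ price u d r L N q S0 f <= price u d r L N (Qpair u d r L 1 L) S0 f.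
Proof.
move=> is_call K hK f q [hq [hs1 hsm]].
rewrite sum_shift in hs1; rewrite sum_shift in hsm.
have hL2 : (1 < L)%N.
  rewrite ltnNge; apply/negP => hle.
  have E : lat_a u d L L = lat_a u d L 1.
    rewrite /lat_a; congr (_ ^+ _ * _ ^+ _); lia.
  by move: (lt_trans hL h1); rewrite E ltxx.
have hf : convex3 f.
  rewrite /f; case: ifP => _ x y z hxy hyz.
    have := convex3_maxaff 1 (- K) x y z hxy hyz.
    by rewrite /call_payoff !mul1r.
  have := convex3_maxaff (-1) K x y z hxy hyz.
  by rewrite /put_payoff !mulN1r ![K + - _]addrC.
have hm0 : 0 < 1 + r by apply: lt_trans hL; exact: lat_a_gt0.
pose P := [pred i : 'I_L.+1 | (1 <= i)%N && (1 + r < lat_a u d L i)].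
have h1L : (1 < L.+1)%N by lia.
have P1 : P (Ordinal h1L) by rewrite /P /= h1.
have hcard : (0 < #|P|)%N by apply/card_gt0P; exists (Ordinal h1L).
have [i0 Pi0 Ei0] := eq_bigmax_cond (fun i : 'I_L.+1 => nat_of_ord i) hcard.
have Els : lstar u d r L = i0 by rewrite /lstar; exact: Ei0.
move: Pi0; rewrite inE /= => /andP[hi01 hi0m].
have hi0L : (i0 < L)%N.
  have := ltn_ord i0; rewrite ltnS leq_eqVlt => /orP[/eqP E|] //.
  by rewrite E in hi0m; move: (lt_trans hL hi0m); rewrite ltxx.
have hi0b : lat_a u d L i0.+1 < 1 + r.
  have hsl : (i0.+1 < L.+1)%N by rewrite ltnS.
  case: (ltP (1 + r) (lat_a u d L i0.+1)) => hx.
    have := @leq_bigmax_cond _ P (fun i : 'I_L.+1 => nat_of_ord i) (Ordinal hsl).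
    rewrite /P /= hx /= => /(_ isT); by rewrite -/(lstar u d r L) Els ltnn.
  rewrite lt_neqAle hx andbT; apply: hne; by rewrite hi0L.
rewrite Els.
have qLnn : qnonneg L (Qpair u d r L i0 i0.+1).
  by apply: qpair_nonneg; apply: p01.
have qUnn : qnonneg L (Qpair u d r L 1 L).
  by apply: qpair_nonneg; apply: p01.
have hinv : 0 <= ((1 + r) ^+ N)^-1 by rewrite invr_ge0 exprn_ge0 // ltW.
split; rewrite /price; apply: ler_wpM2l => //; apply: cmp_expect => //.
- move=> h hh.
  have c1 : (1 <= i0 <= L)%N by rewrite hi01 ltnW.
  have c2 : (1 <= i0.+1 <= L)%N by rewrite hi0L.
  have c3 : (nat_of_ord i0 != i0.+1)%N by rewrite neq_ltn ltnSn.
  rewrite (qpair_sum _ _ _ _ _ _ (fun l => h (lat_a u d L l)) c1 c2 c3).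
  apply: dom_low => //; first exact: lt_trans hi0b hi0m.
  move=> j; apply: convex3_outside => //; first exact: lt_trans hi0b hi0m.
  case: (leqP j.+1 i0) => hj.
    by right; apply: lat_a_mono => //; exact: ltnW.
  by left; apply: lat_a_mono => //; exact: ltn_ord.
- move=> h hh.
  have c1 : (1 <= 1 <= L)%N by rewrite (ltnW hL2).
  have c2 : (1 <= L <= L)%N by rewrite (ltnW hL2) leqnn.
  have c3 : 1%N != L by rewrite neq_ltn hL2.
  rewrite (qpair_sum _ _ _ _ _ _ (fun l => h (lat_a u d L l)) c1 c2 c3).
  apply: dom_up => //; first exact: lt_trans hL h1.
  move=> j; apply: convex3_inside => //; first exact: lt_trans hL h1.
    by apply: lat_a_mono => //; exact: ltn_ord.
  by apply: lat_a_mono => //; exact: ltn_ord.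
Qed.
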